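(* Let $M(z)=\frac{1-z-\sqrt{1-2z-3z^2}}{2z^2}$ be the Motzkin generating function and let $v=v(z)=zM(z)$, so that $v$ is the power series with $v(0)=0$ satisfying $z=\frac{v}{1+v+v^2}$. Define formal power series $G_k(z)$, $k\ge1$, by $G_1=z$ and $$G_{k+1}=\frac{z}{1-\dfrac{zG_k}{1-G_k}}\qquad (k\ge1),$$ and set $F_k=\frac{zG_k}{1-G_k}$. Then for all $k\ge1$, $$G_k=\frac{v}{1+v}\cdot\frac{1-v^{2k}}{1-v^{2k+1}},\qquad F_k=\frac{v^2}{1+v+v^2}\cdot\frac{1-v^{2k}}{1-v^{2k+2}}.$$ Moreover, $F_k$ is the generating function, by number of nodes, of plane trees with at least two nodes in which every leaf lies at odd depth and whose height (maximal depth of a node) is at most $2k-1$.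
   Context: Plane trees are ordered rooted trees; depth of the root is $0$; the height of a tree is the maximal depth of its nodes (number of edges on a longest root-to-node path). Power series are in the variable $z$ marking the number of nodes. *)

(* Defs.v *)
From mathcomp Require Import all_boot all_order all_algebra.
Set Implicit Arguments. Unset Strict Implicit. Unset Printing Implicit Defensive.
Import Order.TTheory GRing.Theory Num.Theory.
Local Open Scope ring_scope.

Definition fps := nat -> rat.

Definition fconst (c : rat) : fps := fun n => if n == 0%N then c else 0.
Definition fX : fps := fun n => if n == 1%N then 1 else 0.
Definition fadd (f g : fps) : fps := fun n => f n + g n.
Definition fopp (f : fps) : fps := fun n => - f n.
Definition fsub (f g : fps) : fps := fadd f (fopp g).
Definition fmul (f g : fps) : fps := fun n => \sum_(i < n.+1) f i * g (n - i)%N.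
Fixpoint fpow (f : fps) (m : nat) : fps :=
  if m is m'.+1 then fmul f (fpow f m') else fconst 1.

(* first n+1 coefficients of the multiplicative inverse of f
   (meaningful when f 0 != 0):  g_0 = 1/f_0,
   g_m = -(1/f_0) * sum_{i=1..m} f_i g_{m-i}. *)
Fixpoint finv_list (f : fps) (n : nat) : seq rat :=
  if n is m.+1 then
    let l := finv_list f m in
    rcons l (- (f 0%N)^-1 * \sum_(1 <= i < m.+2) f i * nth 0 l (m.+1 - i)%N)
  else [:: (f 0%N)^-1].
Definition finv (f : fps) : fps := fun n => nth 0 (finv_list f n) n.
Definition fdiv (f g : fps) : fps := fmul f (finv g).

(* Gs n = G_{n+1} *)
Fixpoint Gs (n : nat) : fps :=
  if n is m.+1 then
    fdiv fX (fsub (fconst 1) (fdiv (fmul fX (Gs m)) (fsub (fconst 1) (Gs m))))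
  else fX.
Definition G (k : nat) : fps := Gs k.-1.
Definition F (k : nat) : fps := fdiv (fmul fX (G k)) (fsub (fconst 1) (G k)).

Inductive ptree : Type := Node of seq ptree.

Fixpoint tsize (t : ptree) : nat :=
  let: Node ts := t in (sumn (map tsize ts)).+1.

Fixpoint theight (t : ptree) : nat :=
  let: Node ts := t in
  if ts is [::] then 0%N else (foldr maxn 0%N (map theight ts)).+1.

Fixpoint leaves_odd_from (d : nat) (t : ptree) : bool :=
  let: Node ts := t in
  if ts is [::] then odd d else all (leaves_odd_from d.+1) ts.

Definition leaves_odd (t : ptree) : bool := leaves_odd_from 0 t.

Definition counted (k n : nat) (t : ptree) : Prop :=
  [/\ tsize t = n, (2 <= tsize t)%N, leaves_odd t & (theight t <= 2 * k - 1)%N].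

(* Main.v *)
Require Import Defs.
From mathcomp Require Import all_boot all_order all_algebra.
Import GRing.Theory Num.Theory.
Local Open Scope ring_scope.
From HB Require Import structures.
From Stdlib Require Import Ring FunctionalExtensionality.
From Stdlib Require List.
From mathcomp Require Import zify.
From Stdlib Require Import Lia.
Local Notation finv := Defs.finv.
Local Notation tsize := Defs.tsize.

Lemma fext (f g : fps) : (forall n, f n = g n) -> f = g.
Proof. exact: functional_extensionality. Qed.

Definition trp (n : nat) (f : fps) : {poly rat} := \poly_(i < n.+1) f i.

Lemma fmul_tr {n m} f g : (m <= n)%N -> fmul f g m = (trp n f * trp n g)`_m.
Proof.
move=> hm; rewrite coefM /fmul; apply: eq_bigr => i _.
have hi : (i < n.+1)%N by apply: leq_trans (ltn_ord i) _; rewrite ltnS.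
rewrite !coef_poly hi ifT // ltnS; exact: leq_trans (leq_subr _ _) hm.
Qed.

Lemma coefM_eq {p q : {poly rat}} (r : {poly rat}) {n} :
  (forall i, (i <= n)%N -> p`_i = q`_i) -> (p * r)`_n = (q * r)`_n.
Proof.
move=> h; rewrite !coefM; apply: eq_bigr => i _; rewrite h //.
by rewrite -ltnS.
Qed.

Lemma coefM_eqr {p q : {poly rat}} (r : {poly rat}) {n} :
  (forall i, (i <= n)%N -> p`_i = q`_i) -> (r * p)`_n = (r * q)`_n.
Proof. by move=> h; rewrite mulrC (coefM_eq _ h) mulrC. Qed.

Lemma trp_mul n f g i : (i <= n)%N -> (trp n (fmul f g))`_i = (trp n f * trp n g)`_i.
Proof. by move=> hi; rewrite coef_poly ltnS hi (fmul_tr _ _ hi). Qed.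

Lemma fmulA f g h : fmul f (fmul g h) = fmul (fmul f g) h.
Proof.
apply: fext => n; rewrite (fmul_tr _ _ (leqnn n)) [RHS](fmul_tr _ _ (leqnn n)).
rewrite (coefM_eqr _ (trp_mul _ _ _)) (coefM_eq _ (trp_mul _ _ _)).
by rewrite mulrA.
Qed.

Lemma fmulC f g : fmul f g = fmul g f.
Proof.
apply: fext => n; rewrite (fmul_tr _ _ (leqnn n)) [RHS](fmul_tr _ _ (leqnn n)).
by rewrite mulrC.
Qed.

Lemma fmul1 f : fmul (fconst 1) f = f.
Proof.
apply: fext => n; rewrite /fmul big_ord_recl /= /fconst /= mul1r subn0 big1 ?addr0 //.
by move=> i _; rewrite /= mul0r.
Qed.

Lemma fmulDl f g h : fmul (fadd f g) h = fadd (fmul f h) (fmul g h).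
Proof.
apply: fext => n; rewrite /fmul /fadd -big_split /=; apply: eq_bigr => i _; exact: mulrDl.
Qed.

Lemma fps_rt : ring_theory (fconst 0) (fconst 1) fadd fmul fsub fopp (@eq fps).
Proof.
constructor.
- by move=> x; apply: fext => n; rewrite /fadd /fconst; case: (n == 0%N); rewrite add0r.
- by move=> x y; apply: fext => n; rewrite /fadd addrC.
- by move=> x y z; apply: fext => n; rewrite /fadd addrA.
- exact: fmul1.
- exact: fmulC.
- exact: fmulA.
- exact: fmulDl.
- by [].
- by move=> x; apply: fext => n; rewrite /fadd /fopp /fconst subrr; case: (n == 0%N).
Qed.

Add Ring fpsRing : fps_rt.

Goal forall a b : fps, fmul (fadd a b) (fsub a b) = fsub (fmul a a) (fmul b b).
Proof. move=> a b. ring. Qed.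


Lemma size_finv_list f n : size (finv_list f n) = n.+1.
Proof. by elim: n => //= n IH; rewrite size_rcons IH. Qed.

Lemma nth_finv_list f n i : (i <= n)%N -> nth 0 (finv_list f n) i = finv f i.
Proof.
elim: n => [|n IH]; first by rewrite leqn0 => /eqP ->.
rewrite leq_eqVlt => /orP [/eqP -> //| hi].
by rewrite /= nth_rcons size_finv_list hi IH.
Qed.

Lemma finv_S f m : finv f m.+1 =
  - (f 0%N)^-1 * \sum_(1 <= i < m.+2) f i * finv f (m.+1 - i)%N.
Proof.
rewrite /finv /= nth_rcons size_finv_list ltnn eqxx; congr (_ * _).
apply: eq_big_nat => i /andP [h1 h2]; rewrite nth_finv_list //.
by rewrite ltnS in h2; case: i h1 h2 => // i _ h; rewrite subSS leq_subr.
Qed.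

Lemma fmul0 f g : fmul f g 0%N = f 0%N * g 0%N.
Proof. by rewrite /fmul big_ord1. Qed.

Lemma finvK f : f 0%N != 0 -> fmul f (finv f) = fconst 1.
Proof.
move=> h; apply: fext => [[|m]].
  by rewrite fmul0 /finv /= mulfV.
rewrite /fmul /fconst /= -(big_mkord xpredT (fun i => f i * finv f (m.+1 - i)%N)).
rewrite big_ltn // finv_S mulrA mulrN mulfV // mulN1r addNr //.
Qed.

Lemma finv_uniq f g : fmul f g = fconst 1 -> f 0%N != 0 -> g = finv f.
Proof.
move=> hg h0.
have e := @finvK f h0.
transitivity (fmul (fmul f g) (finv f)); last by rewrite hg fmul1.
rewrite -fmulA (fmulC g) fmulA e fmul1 //.
Qed.


Lemma mulinv {u} : u 0%N != 0 -> fmul (finv u) u = fconst 1.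
Proof. by move=> h; rewrite fmulC finvK. Qed.

Lemma frac2 (X A B N1 N2 : fps) : A 0%N != 0 -> B 0%N != 0 ->
  fmul X (fmul A B) = fmul N1 N2 ->
  X = fmul (fdiv N1 A) (fdiv N2 B).
Proof.
move=> hA hB e; rewrite /fdiv.
have eA := mulinv hA; have eB := mulinv hB.
transitivity (fmul (fmul X (fmul A B)) (fmul (finv A) (finv B))).
  have -> : fmul (fmul X (fmul A B)) (fmul (finv A) (finv B)) =
     fmul X (fmul (fmul (finv A) A) (fmul (finv B) B)) by ring.
  rewrite eA eB; ring.
rewrite e; ring.
Qed.

Lemma c0_add f g : fadd f g 0%N = f 0%N + g 0%N. Proof. by []. Qed.
Lemma c0_sub f g : fsub f g 0%N = f 0%N - g 0%N. Proof. by []. Qed.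
Lemma c0_one : fconst 1 0%N = 1. Proof. by []. Qed.
Lemma c0_X : fX 0%N = 0. Proof. by []. Qed.
Lemma Gs0 j : Gs j 0%N = 0.
Proof. by case: j => [|j] //=; rewrite /fdiv fmul0 c0_X mul0r. Qed.

Section Alg.
Variable v : fps.
Hypothesis hv0 : v 0%N = 0.
Let Q := fadd (fadd (fconst 1) v) (fpow v 2).
Hypothesis hz : fX = fdiv v Q.

Lemma Q0 : Q 0%N = 1.
Proof. by rewrite /Q !c0_add /= fmul0 hv0 mul0r !addr0. Qed.

Lemma zQ : fmul fX Q = v.
Proof.
rewrite hz /fdiv.
have -> : fmul (fmul v (finv Q)) Q = fmul v (fmul (finv Q) Q) by ring.
rewrite mulinv ?Q0 ?oner_neq0 //; ring.
Qed.

Lemma u1 a : fsub (fconst 1) (fmul v a) 0%N != 0.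
Proof. by rewrite c0_sub fmul0 hv0 mul0r subr0 oner_neq0. Qed.
Lemma u2 : fadd (fconst 1) v 0%N != 0.
Proof. by rewrite c0_add hv0 addr0 oner_neq0. Qed.
Lemma u3 a : fmul (fadd (fconst 1) v) (fsub (fconst 1) (fmul v a)) 0%N != 0.
Proof. by rewrite fmul0 mulf_neq0 // ?u1 ?u2. Qed.
Lemma u4 a : fmul Q (fsub (fconst 1) (fmul v a)) 0%N != 0.
Proof. by rewrite fmul0 mulf_neq0 // ?u1 // Q0 oner_neq0. Qed.

Lemma stepF (g a : fps) : g 0%N = 0 ->
  fmul g (fmul (fadd (fconst 1) v) (fsub (fconst 1) (fmul v a)))
     = fmul v (fsub (fconst 1) a) ->
  fmul (fdiv (fmul fX g) (fsub (fconst 1) g))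
       (fmul Q (fsub (fconst 1) (fmul v (fmul v a))))
     = fmul v (fmul v (fsub (fconst 1) a)).
Proof.
move=> g0 IH.
set P := fmul (fadd (fconst 1) v) (fsub (fconst 1) (fmul v a)).
set W := fsub (fconst 1) g.
have W0 : W 0%N != 0 by rewrite /W c0_sub g0 subr0 oner_neq0.
have e1 : fmul W P = fsub (fconst 1) (fmul v (fmul v a)).
  have -> : fmul W P = fsub P (fmul g P) by rewrite /W; ring.
  rewrite IH /P; ring.
rewrite -e1 /fdiv.
have -> : fmul (fmul (fmul fX g) (finv W)) (fmul Q (fmul W P)) =
  fmul (fmul (finv W) W) (fmul (fmul fX Q) (fmul g P)) by ring.
rewrite mulinv // zQ IH; ring.
Qed.

Lemma stepG (f a : fps) :
  fmul f (fmul Q (fsub (fconst 1) (fmul v (fmul v a))))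
     = fmul v (fmul v (fsub (fconst 1) a)) ->
  fmul (fdiv fX (fsub (fconst 1) f))
     (fmul (fadd (fconst 1) v) (fsub (fconst 1) (fmul v (fmul v (fmul v a)))))
   = fmul v (fsub (fconst 1) (fmul v (fmul v a))).
Proof.
move=> eF.
set D := fsub (fconst 1) (fmul v (fmul v a)).
set U := fsub (fconst 1) f.
have eU : fmul U (fmul Q D) =
   fmul (fadd (fconst 1) v) (fsub (fconst 1) (fmul v (fmul v (fmul v a)))).
  have -> : fmul U (fmul Q D) = fsub (fmul Q D) (fmul f (fmul Q D)) by rewrite /U; ring.
  rewrite eF /D /Q /=; ring.
have U0 : U 0%N != 0.
  have : (fmul U (fmul Q D)) 0%N != 0 by rewrite eU u3.
  by rewrite fmul0; apply: contra => /eqP ->; rewrite mul0r.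
rewrite -eU /fdiv.
have -> : fmul (fmul fX (finv U)) (fmul U (fmul Q D)) =
  fmul (fmul (finv U) U) (fmul (fmul fX Q) D) by ring.
rewrite mulinv // zQ; ring.
Qed.

Lemma ginvariant j :
  let a := fpow v (2 * j.+1) in
  fmul (Gs j) (fmul (fadd (fconst 1) v) (fsub (fconst 1) (fmul v a)))
     = fmul v (fsub (fconst 1) a) /\
  fmul (F j.+1) (fmul Q (fsub (fconst 1) (fmul v (fmul v a))))
     = fmul v (fmul v (fsub (fconst 1) a)).
Proof.
elim: j => [|j IH] a.
- have eG : fmul (Gs 0) (fmul (fadd (fconst 1) v) (fsub (fconst 1) (fmul v a)))
     = fmul v (fsub (fconst 1) a).
    rewrite /a /=.
    transitivity (fmul (fmul fX Q) (fmul (fsub (fconst 1) v) (fadd (fconst 1) v))).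
      rewrite /Q /=; ring.
    rewrite zQ; ring.
  by split => //; apply: stepF => //; apply: Gs0.
- have ea : a = fmul v (fmul v (fpow v (2 * j.+1))).
    by rewrite /a (_ : (2 * j.+2 = (2 * j.+1).+2)%N) // mulnS.
  case: IH => _ IHF.
  have eG : fmul (Gs j.+1) (fmul (fadd (fconst 1) v) (fsub (fconst 1) (fmul v a)))
     = fmul v (fsub (fconst 1) a) by rewrite ea; apply: stepG.
  by split => //; apply: stepF => //; apply: Gs0.
Qed.
End Alg.

Local Close Scope ring_scope.

Fixpoint ptree_ind' (P : ptree -> Prop)
  (H : forall ts, List.Forall P ts -> P (Node ts)) (t : ptree) : P t :=
  match t with
  | Node ts => H ts ((fix go (ts : seq ptree) : List.Forall P ts :=
       match ts with
       | [::] => List.Forall_nil P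
       | t :: ts => List.Forall_cons t (ptree_ind' P H t) (go ts)
       end) ts)
  end.

Fixpoint enc (t : ptree) : GenTree.tree unit :=
  let: Node ts := t in GenTree.Node 0 (map enc ts).
Fixpoint dec (t : GenTree.tree unit) : ptree :=
  match t with
  | GenTree.Leaf _ => Node [::]
  | GenTree.Node _ ts => Node (map dec ts)
  end.
Lemma encK : cancel enc dec.
Proof.
elim/ptree_ind' => ts H /=; congr Node; elim: H => //= t ts' -> _ ->. by [].
Qed.
HB.instance Definition _ := Countable.copy ptree (can_type encK).

Lemma Node_inj : injective Node. Proof. by move=> x y []. Qed.

Lemma tsize_gt0 t : (0 < tsize t)%N. Proof. by case: t. Qed.

Lemma lof_SS d t : leaves_odd_from d.+2 t = leaves_odd_from d t.
Proof.
elim/ptree_ind': t d => ts H d /=; case: ts H => [|t ts] H; first by rewrite /= negbK.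
have: forall d, all (leaves_odd_from d.+3) (t :: ts) = all (leaves_odd_from d.+1) (t :: ts).
  by move=> d'; elim: H => //= x xs Hx _ ->; rewrite Hx.
by move=> ->.
Qed.

Lemma lof_node_odd d ts : odd d ->
  leaves_odd_from d (Node ts) = all (leaves_odd_from d.+1) ts.
Proof. by case: ts => //= _ _ ->. Qed.

Lemma lof_node_even d ts : ~~ odd d ->
  leaves_odd_from d (Node ts) = (ts != [::]) && all (leaves_odd_from d.+1) ts.
Proof. by case: ts => //= /negPf ->. Qed.

Lemma foldr_max_le s h : (foldr maxn 0 s <= h)%N = all (fun x => x <= h)%N s.
Proof. by elim: s => //= x s IH; rewrite geq_max IH. Qed.

Lemma height_node ts h :
  (theight (Node ts) <= h.+1)%N = all (fun t => theight t <= h)%N ts.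
Proof.
case: ts => //= t ts; rewrite ltnS geq_max foldr_max_le all_map.
by [].
Qed.

Lemma height0 t : (theight t <= 0)%N = (t == Node [::]).
Proof.
case: t => [[|t ts]] /=; first by rewrite eqxx.
by apply/esym/negbTE; apply/eqP => -[].
Qed.

Section Forests.
Variable cls : nat -> seq ptree.

Fixpoint forf (fuel m : nat) : seq (seq ptree) :=
  if m is m'.+1 then
    if fuel is fuel'.+1 then
      [seq ts | i <- iota 0 m,
                ts <- [seq t :: ts | t <- cls i.+1, ts <- forf fuel' (m' - i)]]
    else [::]
  else [:: [::]].
Definition forests m := forf m m.

Lemma forfS f m : forf f.+1 m.+1 =
  [seq ts | i <- iota 0 m.+1,
            ts <- [seq t :: ts | t <- cls i.+1, ts <- forf f (m - i)]].
Proof. by []. Qed.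

Lemma forf_fuel f1 f2 m : (m <= f1)%N -> (m <= f2)%N -> forf f1 m = forf f2 m.
Proof.
elim: f1 f2 m => [|f1 IH] [|f2] [|m] // h1 h2.
rewrite !forfS; apply: (congr1 flatten); apply: eq_map => i.
by rewrite (IH f2) // ?(leq_trans (leq_subr _ _)).
Qed.

Lemma forests0 : forests 0 = [:: [::]]. Proof. by []. Qed.

Lemma forestsS m : forests m.+1 =
  [seq ts | i <- iota 0 m.+1,
            ts <- [seq t :: ts | t <- cls i.+1, ts <- forests (m - i)]].
Proof.
rewrite /forests forfS; apply: (congr1 flatten); apply: eq_map => i.
by rewrite (@forf_fuel m (m - i) (m - i) (leq_subr _ _) (leqnn _)).
Qed.

Hypothesis hcls : forall n t, t \in cls n -> tsize t = n.

Lemma forests_mem m ts : ts \in forests m <->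
  (sumn (map tsize ts) = m /\ all (fun t => t \in cls (tsize t)) ts).
Proof.
elim/ltn_ind: m ts => [[|m]] IH ts.
  rewrite forests0 inE; split; first by move/eqP ->.
  case: ts => [|t ts] //= [h _]; have := tsize_gt0 t; lia.
rewrite forestsS; split.
  case/flattenP => s /mapP [i hi ->] /mapP [ts1 /allpairsPdep [t [ts' [ht hts' ->]]] ->].
  rewrite mem_iota in hi.
  have [h1 h2] := (IH (m - i)%N ltac:(lia) ts').1 hts'.
  have hs := hcls _ _ ht.
  split; first by rewrite /= h1 hs; lia.
  by rewrite /= hs ht.
case: ts => [|t ts']; first by case.
case=> hsum /andP [ht hall]; rewrite /= in hsum.
have hpos := tsize_gt0 t.
apply/flattenP; exists [seq ts | ts <- [seq t0 :: ts | t0 <- cls (tsize t).-1.+1,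
   ts <- forests (m - (tsize t).-1)]].
  apply/mapP; exists (tsize t).-1 => //; rewrite mem_iota; lia.
rewrite map_id; apply/allpairsPdep; exists t, ts'; split => //.
  by rewrite prednK.
apply/(IH (m - (tsize t).-1)%N ltac:(lia)); split => //; lia.
Qed.

Hypothesis huniq : forall n, uniq (cls n).

Lemma forests_uniq m : uniq (forests m).
Proof.
elim/ltn_ind: m => [[|m]] IH; first by [].
rewrite forestsS; apply: allpairs_uniq_dep.
- exact: iota_uniq.
- move=> i; rewrite mem_iota => hi.
  apply: allpairs_uniq => //; first by apply: IH; lia.
  by move=> [a b] [c d] _ _ /= [-> ->].
- move=> [i x] [j y] /allpairsPdep [i1 [x1 [_ hx1 [-> ->]]]]
     /allpairsPdep [j1 [y1 [_ hy1 [-> ->]]]] /= exy.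
  subst y1.
  case/allpairsPdep: hx1 => [t [ts [ht _ ex]]].
  case/allpairsPdep: hy1 => [t' [ts' [ht' _ ey]]].
  rewrite ex in ey; case: ey => et _; subst t'.
  have := hcls _ _ ht; have := hcls _ _ ht' => -> [] ->; by [].
Qed.

Lemma forests_size m : size (forests m.+1) =
  (\sum_(i < m.+1) size (cls i.+1) * size (forests (m - i)))%N.
Proof.
rewrite forestsS size_allpairs_dep sumnE big_map.
rewrite -(big_mkord xpredT (fun i => size (cls i.+1) * size (forests (m - i)))%N).
rewrite /index_iota subn0.
by apply: eq_bigr => i _; rewrite size_allpairs.
Qed.
End Forests.

Definition oddstep (e : nat -> seq ptree) m :=
  if m is m'.+1 then map Node (forests e m') else [::].
Definition evenstep (o : nat -> seq ptree) m :=
  if m is m'.+2 then map Node (forests o m'.+1) else [::].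
Fixpoint clsp h : (nat -> seq ptree) * (nat -> seq ptree) :=
  if h is h'.+1 then (oddstep (clsp h').2, evenstep (clsp h').1)
  else (fun m => if m == 1%N then [:: Node [::]] else [::], fun _ => [::]).
Definition Ocls h := (clsp h).1.
Definition Ecls h := (clsp h).2.

Lemma all_iff {P : pred ptree} {e : nat -> seq ptree} ts :
  (forall n t, t \in e n <-> tsize t = n /\ P t) ->
  all (fun c => c \in e (tsize c)) ts = all P ts.
Proof.
move=> he; apply: eq_all => c; apply/idP/idP.
  by move/he => [].
by move=> hc; apply/he.
Qed.

Lemma hcls_of {P : pred ptree} {e : nat -> seq ptree} :
  (forall n t, t \in e n <-> tsize t = n /\ P t) ->
  forall n t, t \in e n -> tsize t = n.
Proof. by move=> he n t /he []. Qed.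

Lemma oddstep_mem (e : nat -> seq ptree) (P : pred ptree) :
  (forall n t, t \in e n <-> tsize t = n /\ P t) ->
  forall m t, t \in oddstep e m <->
    tsize t = m /\ (let: Node ts := t in all P ts).
Proof.
move=> he [|m] [ts] /=; first by split => // -[].
rewrite (mem_map Node_inj) (forests_mem _ (hcls_of he)) (all_iff _ he).
by split => [[-> ->]|[[->] ->]].
Qed.

Lemma sumn_pos ts : (sumn (map tsize ts) == 0%N) = (ts == [::]).
Proof. by case: ts => //= t ts; have := tsize_gt0 t; case: (tsize t). Qed.

Lemma evenstep_mem (o : nat -> seq ptree) (P : pred ptree) :
  (forall n t, t \in o n <-> tsize t = n /\ P t) ->
  forall m t, t \in evenstep o m <->
    tsize t = m /\ (let: Node ts := t in (ts != [::]) && all P ts).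
Proof.
move=> he [|[|m]] [ts] /=; first by split => // -[].
  split => // -[[/eqP]]; rewrite sumn_pos => /eqP -> //.
rewrite (mem_map Node_inj) (forests_mem _ (hcls_of he)) (all_iff _ he).
split => [[hs ha]|[[hs] /andP [_ ha]]]; split => //.
- by rewrite hs.
- by rewrite ha andbT -sumn_pos hs.
Qed.

Lemma cls_mem h :
  (forall n t, t \in Ocls h n <->
     tsize t = n /\ leaves_odd_from 1 t && (theight t <= h)%N) /\
  (forall n t, t \in Ecls h n <->
     tsize t = n /\ leaves_odd_from 0 t && (theight t <= h)%N).
Proof.
elim: h => [|h [IHo IHe]].
  split => n t /=; rewrite height0.
    rewrite /Ocls /=; have [->|ht] := eqVneq t (Node [::]).
      rewrite andbT /=; case: eqP => [<-|hn]; first by rewrite inE eqxx.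
      by rewrite in_nil; split => // -[/esym].
    rewrite andbF; case: eqP => _; last by rewrite in_nil; split => // -[].
    by rewrite inE (negbTE ht); split => // -[].
  rewrite /Ecls /= in_nil andbC; split => // -[_].
  by case: eqP => [->|].
split => n t.
  apply: iff_trans
   (@oddstep_mem _ (fun c => leaves_odd_from 0 c && (theight c <= h)%N) IHe n t) _.
  case: t => ts.
  rewrite lof_node_odd // height_node.
  have -> : all (leaves_odd_from 2) ts = all (leaves_odd_from 0) ts.
    by apply: eq_all => c; rewrite lof_SS.
  by rewrite -all_predI; split => -[a b]; split.
apply: iff_trans
   (@evenstep_mem _ (fun c => leaves_odd_from 1 c && (theight c <= h)%N) IHo n t) _.
case: t => ts.
by rewrite lof_node_even // height_node -andbA -all_predI; split => -[a b]; split.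
Qed.

Lemma cls_uniq h : (forall n, uniq (Ocls h n)) /\ (forall n, uniq (Ecls h n)).
Proof.
elim: h => [|h [IHo IHe]].
  by split => n //=; rewrite /Ocls /=; case: (n == 1%N).
have [Mo Me] := cls_mem h.
split => [[|[|n]]|[|[|n]]] //=; rewrite /Ocls /Ecls /= ?map_inj_uniq //;
  try exact: Node_inj.
- exact: (forests_uniq _
     (@hcls_of (fun c => leaves_odd_from 0 c && (theight c <= h)%N) _ Me) IHe).
- exact: (forests_uniq _
     (@hcls_of (fun c => leaves_odd_from 1 c && (theight c <= h)%N) _ Mo) IHo).
Qed.

Lemma lof0_size t : leaves_odd_from 0 t -> (2 <= tsize t)%N.
Proof. by case: t => [[|c cs]] //= _; have := tsize_gt0 c; rewrite !ltnS addn_gt0 => ->. Qed.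

Local Open Scope ring_scope.

Definition ser {T : Type} (c : nat -> seq T) : fps := fun n => (size (c n))%:R.

Lemma fmulX g m : fmul fX g m.+1 = g m.
Proof.
rewrite /fmul big_ord_recl big_ord_recl /= big1 ?addr0.
  by rewrite /fX /= mul0r add0r mul1r subSS subn0.
by move=> i _; rewrite /fX /=; rewrite mul0r.
Qed.

Lemma fmulX0 g : fmul fX g 0%N = 0.
Proof. by rewrite fmul0 mul0r. Qed.

Lemma forests_ser (cls : nat -> seq ptree) :
  (forall n t, t \in cls n -> tsize t = n) ->
  ser (forests cls) = finv (fsub (fconst 1) (ser cls)).
Proof.
move=> hcls.
have c0 : cls 0%N = [::].
  case e: (cls 0%N) => [|t s] //.
  have := hcls 0%N t; rewrite e mem_head => /(_ isT) ht.
  by have := tsize_gt0 t; rewrite ht.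
apply: finv_uniq; last by rewrite c0_sub /ser c0 subr0 oner_neq0.
have -> : fmul (fsub (fconst 1) (ser cls)) (ser (forests cls)) =
  fsub (ser (forests cls)) (fmul (ser cls) (ser (forests cls))) by ring.
apply: fext => [[|m]].
  by rewrite c0_sub fmul0 /ser c0 /= mul0r subr0.
rewrite /fsub /fadd /fopp /fmul big_ord_recl /ser c0 mul0r add0r.
rewrite forests_size natr_sum.
rewrite /fconst /=.
under eq_bigr => i _ do rewrite natrM.
by rewrite subrr.
Qed.

Lemma hO h n t : t \in Ocls h n -> tsize t = n.
Proof. by move/((cls_mem h).1 n t) => []. Qed.
Lemma hE h n t : t \in Ecls h n -> tsize t = n.
Proof. by move/((cls_mem h).2 n t) => []. Qed.

Lemma Oser0 : ser (Ocls 0) = fX.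
Proof. by apply: fext => n; rewrite /ser /Ocls /= /fX; case: (n == 1%N). Qed.

Lemma OserS h : ser (Ocls h.+1) = fmul fX (finv (fsub (fconst 1) (ser (Ecls h)))).
Proof.
rewrite -(@forests_ser _ (@hE h)); apply: fext => [[|m]].
  by rewrite fmulX0.
by rewrite fmulX /ser /Ocls /= size_map.
Qed.

Lemma EserS h : ser (Ecls h.+1) =
  fmul fX (fsub (finv (fsub (fconst 1) (ser (Ocls h)))) (fconst 1)).
Proof.
rewrite -(@forests_ser _ (@hO h)); apply: fext => [[|[|m]]].
- by rewrite fmulX0.
- by rewrite fmulX /fsub /fadd /fopp /ser /fconst /= subrr.
- by rewrite fmulX /fsub /fadd /fopp /ser /fconst /Ecls /= size_map subr0.
Qed.

Lemma EfromO h g : ser (Ocls h) = g -> g 0%N = 0 ->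
  ser (Ecls h.+1) = fdiv (fmul fX g) (fsub (fconst 1) g).
Proof.
move=> eg g0; rewrite EserS eg /fdiv.
set W := fsub (fconst 1) g.
have hW : W 0%N != 0 by rewrite /W c0_sub g0 subr0 oner_neq0.
have e := mulinv hW.
transitivity (fmul fX (fsub (finv W) (fmul (finv W) W))); first by rewrite e.
rewrite /W; ring.
Qed.

Lemma key j : ser (Ocls (2 * j)) = Gs j /\ ser (Ecls (2 * j).+1) = F j.+1.
Proof.
suff hO : ser (Ocls (2 * j)) = Gs j by split => //; apply: EfromO => //; apply: Gs0.
elim: j => [|j IH]; first by rewrite muln0 Oser0.
by rewrite mulnS OserS (@EfromO _ _ IH (Gs0 j)).
Qed.

Theorem mainTheorem2 (v : fps) :
  v 0%N = 0 ->
  fX = fdiv v (fadd (fadd (fconst 1) v) (fpow v 2)) ->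
  forall k : nat, (1 <= k)%N ->
    [/\ G k = fmul (fdiv v (fadd (fconst 1) v))
                   (fdiv (fsub (fconst 1) (fpow v (2 * k)))
                         (fsub (fconst 1) (fpow v (2 * k).+1))),
        F k = fmul (fdiv (fpow v 2) (fadd (fadd (fconst 1) v) (fpow v 2)))
                   (fdiv (fsub (fconst 1) (fpow v (2 * k)))
                         (fsub (fconst 1) (fpow v (2 * k).+2)))
      & forall n : nat, exists N : nat,
          F k n = N%:R /\
          exists f : 'I_N -> ptree,
            injective f /\ (forall t, counted k n t <-> exists i, f i = t)].
Proof.
move=> hv0 hz [|j] // _.
have [inv1 inv2] := ginvariant _ hv0 hz j.
split.
- apply: frac2; [exact: (u2 _ hv0) | exact: (u1 _ hv0) | exact: inv1].
- apply: frac2; [by rewrite (Q0 _ hv0) oner_neq0 | exact: (u1 _ hv0) |].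
  apply: etrans inv2 _; rewrite /=; ring.
move=> n; have [_ eF] := key j.
set s := Ecls (2 * j).+1 n.
exists (size s); split; first by rewrite -eF.
have us : uniq s := (cls_uniq _).2 n.
exists (fun i : 'I_(size s) => nth (Node [::]) s i); split.
  move=> a b /eqP; rewrite nth_uniq ?ltn_ord // => /eqP; exact: val_inj.
have hk : (2 * j.+1 - 1 = (2 * j).+1)%N by rewrite mulnS subn1.
move=> t; split.
  case=> h1 h2 h3 h4.
  have hin : t \in s.
    apply/((cls_mem _).2 n t); split => //; apply/andP; split => //.
    by rewrite -hk.
  have hi : (index t s < size s)%N by rewrite index_mem.
  by exists (Ordinal hi); rewrite /= nth_index.
case=> i <-.
have hin := mem_nth (Node [::]) (ltn_ord i).
case/((cls_mem _).2 n _): hin => h1 /andP [h3 h4].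
split => //; first by rewrite h1 -h1 lof0_size.
by rewrite hk.
Qed.
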